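(* Consider the continuous Bomber Problem described in the context, with parameter $v\in(0,1]$. Let $x=x_t>0$ be defined for small $t>0$ with $|\log t|/x_t\to\rho\in(0,\infty)$ as $t\to 0$. If there is $\gamma\in(0,1]$ such that $H(x_t,t)\ge 1-e^{-\gamma x_t+o(x_t)}$ as $t\to 0$, then $K(x_t,t)\ge \gamma x_t+o(x_t)$ as $t\to 0$.
   Context: The Bomber Problem: a bomber holding an amount $x\ge 0$ of (continuously divisible) ammunition must survive for a remaining time $t\ge 0$. Enemies arrive according to a time-homogeneous Poisson process of rate 1. Upon meeting an enemy, the bomber chooses an amount $y\in[0,x]$ of its current ammunition to fire; the enemy survives this with probability $e^{-y}$, and if it survives it destroys the bomber with probability $v\in(0,1]$. Thus the bomber survives an encounter in which it spends $y$ with probability $a(y)=1-ve^{-y}$, and continues with ammunition $x-y$. $P(x,t)$ denotes the optimal probability that the bomber survives for time $t$ starting with ammunition $x$; $H(x,t)$ denotes the optimal conditional probability of survival given that an enemy is encountered at remaining time $t$ while holding ammunition $x$; and $K(x,t)\in[0,x]$ denotes the optimal amount of ammunition to fire at that enemy, so that $H(x,t)=a(K(x,t))P(x-K(x,t),t)$. The notation $o(x_t)$ refers to a quantity $r_t$ with $r_t/x_t\to 0$ as $t\to 0$. *)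

(* Defs.v *)
From Stdlib Require Import Reals.
From Coquelicot Require Import Coquelicot.
Open Scope R_scope.

(* Survival probability of an encounter in which the bomber spends y. *)
Definition a (v y : R) : R := 1 - v * exp (- y).

(* Dynamic-programming characterisation of the continuous Bomber Problem:
   - P x t : optimal survival probability (a probability, in [0,1]);
   - H x t : optimal conditional survival probability given an encounter
             at remaining time t with ammunition x,
             H x t = max_{0<=y<=x} a(y) P(x-y,t);
   - K x t : an optimal amount to fire, attaining that maximum;
   - first-encounter decomposition (Poisson rate 1):
       P(x,t) = e^{-t} + int_0^t e^{-(t-s)} H(x,s) ds. *)
Definition IsBomberSolution (v : R) (P H K : R -> R -> R) : Prop :=
  (forall x t, 0 <= x -> 0 <= t -> 0 <= P x t <= 1) /\
  (forall x t, 0 <= x -> 0 <= t ->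
     0 <= K x t <= x /\
     H x t = a v (K x t) * P (x - K x t) t /\
     (forall y, 0 <= y <= x -> a v y * P (x - y) t <= H x t)) /\
  (forall x t, 0 <= x -> 0 <= t ->
     is_RInt (fun s => exp (- (t - s)) * H x s) 0 t (P x t - exp (- t))).

(* Main.v *)
Require Import Defs.
From Stdlib Require Import Reals Lra.
From Coquelicot Require Import Coquelicot.
Open Scope R_scope.

Lemma ball_R (y e z : R) : ball y e z <-> Rabs (z - y) < e.
Proof. reflexivity. Qed.

Lemma inv_x_lim (x : R -> R) (rho : R) :
  at_right 0 (fun t => 0 < x t) -> 0 < rho ->
  filterlim (fun t => Rabs (ln t) / x t) (at_right 0) (locally rho) ->
  filterlim (fun t => / x t) (at_right 0) (locally 0).
Proof.
  intros Hx Hr Hl.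
  apply filterlim_locally. intros eps.
  assert (HB := proj1 (filterlim_locally _ _) Hl (mkposreal rho Hr)).
  assert (HC : at_right 0 (fun t => ln t < - (2 * rho / eps))).
  { apply (is_lim_ln_0 (fun y => y < - (2 * rho / eps))). exists (- (2 * rho / eps)). auto. }
  generalize (filter_and _ _ Hx (filter_and _ _ HB HC)).
  apply filter_imp. intros t [H1 [H2 H3]].
  rewrite ball_R in H2. simpl in H2. rewrite ball_R.
  assert (He := cond_pos eps).
  assert (Hq : 0 < 2 * rho / eps) by (apply Rdiv_lt_0_compat; lra).
  assert (Hln : Rabs (ln t) > 2 * rho / eps).
  { rewrite Rabs_left by lra. lra. }
  assert (Hlt : Rabs (ln t) / x t < 2 * rho).
  { apply Rabs_def2 in H2. destruct H2. lra. }
  rewrite Rminus_0_r, Rabs_pos_eq by (left; apply Rinv_0_lt_compat; lra).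
  assert (HL : 0 < Rabs (ln t)) by lra.
  assert (Hm : / x t * Rabs (ln t) < 2 * rho).
  { unfold Rdiv in Hlt. lra. }
  assert (Hm2 : 2 * rho < eps * Rabs (ln t)).
  { apply Rmult_lt_compat_l with (r := eps) in Hln; [|lra].
    unfold Rdiv in Hln. rewrite (Rmult_comm 2) in Hln.
    replace (eps * (rho * 2 * / eps)) with (2 * rho) in Hln by (field; lra). lra. }
  apply Rmult_lt_reg_r with (Rabs (ln t)); lra.
Qed.

Theorem lemma3 (v : R) (P H K : R -> R -> R) (x : R -> R) (rho gamma : R) :
  0 < v <= 1 ->
  IsBomberSolution v P H K ->
  at_right 0 (fun t => 0 < x t) ->
  0 < rho ->
  filterlim (fun t => Rabs (ln t) / x t) (at_right 0) (locally rho) ->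
  0 < gamma <= 1 ->
  (exists r : R -> R,
      filterlim (fun t => r t / x t) (at_right 0) (locally 0) /\
      at_right 0 (fun t => H (x t) t >= 1 - exp (- (gamma * x t) + r t))) ->
  exists r : R -> R,
    filterlim (fun t => r t / x t) (at_right 0) (locally 0) /\
    at_right 0 (fun t => K (x t) t >= gamma * x t + r t).
Proof.
  intros Hv [HP [HH _]] Hx Hr Hl Hg [r [Hrl Hre]].
  assert (Hinv := inv_x_lim x rho Hx Hr Hl).
  exists (fun t => ln v - r t). split.
  - apply filterlim_locally. intros eps.
    assert (He := cond_pos eps).
    set (c := Rabs (ln v) + 1).
    assert (Hc : 0 < c) by (unfold c; generalize (Rabs_pos (ln v)); lra).
    assert (e1 : 0 < eps / 2) by lra.
    assert (e2 : 0 < eps / 2 / c) by (apply Rdiv_lt_0_compat; lra).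
    generalize (filter_and _ _
      (proj1 (filterlim_locally _ _) Hrl (mkposreal _ e1))
      (proj1 (filterlim_locally _ _) Hinv (mkposreal _ e2))).
    apply filter_imp. intros t [A B].
    rewrite ball_R in A; rewrite ball_R in B; rewrite ball_R. simpl in *.
    rewrite !Rminus_0_r in A, B |- *.
    replace ((ln v - r t) / x t) with (ln v * / x t - r t / x t) by (unfold Rdiv; ring).
    eapply Rle_lt_trans; [apply Rabs_triang|]. rewrite Rabs_Ropp, Rabs_mult.
    assert (Rabs (ln v) * Rabs (/ x t) <= c * Rabs (/ x t)).
    { apply Rmult_le_compat_r; [apply Rabs_pos| unfold c; lra]. }
    assert (c * Rabs (/ x t) < c * (eps / 2 / c)) by (apply Rmult_lt_compat_l; lra).
    replace (c * (eps / 2 / c)) with (eps / 2) in H1 by (field; lra).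
    lra.
  - assert (Hpos : at_right 0 (fun t => 0 < t)).
    { exists (mkposreal 1 Rlt_0_1). intros y _ Hy. exact Hy. }
    generalize (filter_and _ _ Hpos (filter_and _ _ Hx Hre)).
    apply filter_imp. intros t [Ht [Hxt He]].
    destruct (HH (x t) t ltac:(lra) ltac:(lra)) as [[K0 K1] [Heq _]].
    assert (HP' := HP (x t - K (x t) t) t ltac:(lra) ltac:(lra)).
    rewrite Heq in He. unfold a in He.
    assert (Hexp : exp (- K (x t) t) <= 1).
    { rewrite <- exp_0. destruct (Req_dec (K (x t) t) 0) as [E|E].
      - rewrite E, Ropp_0. lra.
      - left. apply exp_increasing. lra. }
    assert (Ha : 0 <= 1 - v * exp (- K (x t) t)).
    { assert (0 < exp (- K (x t) t)) by apply exp_pos. nra. }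
    assert (Hle : (1 - v * exp (- K (x t) t)) * P (x t - K (x t) t) t
                  <= 1 - v * exp (- K (x t) t)) by nra.
    assert (Hk : v * exp (- K (x t) t) <= exp (- (gamma * x t) + r t)) by lra.
    assert (Hk2 : ln (v * exp (- K (x t) t)) <= - (gamma * x t) + r t).
    { rewrite <- (ln_exp (- (gamma * x t) + r t)).
      destruct Hk as [Hk|Hk].
      - left. apply ln_increasing; [|exact Hk].
        apply Rmult_lt_0_compat; [lra|apply exp_pos].
      - rewrite Hk. lra. }
    rewrite ln_mult in Hk2 by (lra || apply exp_pos).
    rewrite ln_exp in Hk2. lra.
Qed.
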